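(* Let $a,b,c,k,m>0$ and consider the system $$\frac{dx}{dt}=bx(1-x-cy),\qquad \frac{dy}{dt}=y\Big(\frac{1}{1+kx}-y-ax-mxy\Big).$$ Suppose $0<c<1$ and $0<k<\frac1a-1$. Then the locally stable positive equilibrium $E_{2*}=(x^*,y^* )$ (with $x^*,y^*>0$) of the system is globally stable, i.e. every solution with $x(0)>0$, $y(0)>0$ converges to $E_{2*}$ as $t\to\infty$.
   Context: All parameters are positive. A positive equilibrium is an equilibrium with both coordinates positive; $E_{2*}$ denotes the positive equilibrium that is a stable node. *)

(* Defs.v *)
From Stdlib Require Import Reals.
From Coquelicot Require Import Coquelicot.
Open Scope R_scope.

Definition fx (a b c k m x y : R) : R := b * x * (1 - x - c * y).
Definition fy (a b c k m x y : R) : R :=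
  y * (/ (1 + k * x) - y - a * x - m * x * y).

Definition pos_equilibrium (a b c k m xs ys : R) : Prop :=
  0 < xs /\ 0 < ys /\ fx a b c k m xs ys = 0 /\ fy a b c k m xs ys = 0.

Definition J11 (a b c k m x y : R) : R := b * (1 - x - c * y) - b * x.
Definition J12 (a b c k m x y : R) : R := - b * c * x.
Definition J21 (a b c k m x y : R) : R :=
  y * (- k / (1 + k * x) ^ 2 - a - m * y).
Definition J22 (a b c k m x y : R) : R :=
  (/ (1 + k * x) - y - a * x - m * x * y) + y * (- 1 - m * x).

(* Stable node: both eigenvalues of the Jacobian are real and negative,
   i.e. the characteristic polynomial l^2 - tr l + det has two real
   negative roots l1, l2 (counted with multiplicity). *)
Definition stable_node (a b c k m xs ys : R) : Prop :=
  exists l1 l2 : R, l1 < 0 /\ l2 < 0 /\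
    l1 + l2 = J11 a b c k m xs ys + J22 a b c k m xs ys /\
    l1 * l2 = J11 a b c k m xs ys * J22 a b c k m xs ys
              - J12 a b c k m xs ys * J21 a b c k m xs ys.

Definition is_solution (a b c k m : R) (x y : R -> R) : Prop :=
  (forall t, 0 < t -> is_derive x t (fx a b c k m (x t) (y t))) /\
  (forall t, 0 < t -> is_derive y t (fy a b c k m (x t) (y t))) /\
  filterlim x (at_right 0) (locally (x 0)) /\
  filterlim y (at_right 0) (locally (y 0)).

(* Main.v *)
Require Import Defs.
From Stdlib Require Import Reals Lra.
From Coquelicot Require Import Coquelicot.
Open Scope R_scope.

Lemma ballR (x y : R) (e : R) : ball x e y <-> Rabs (y - x) < e.
Proof. split; intro H; exact H. Qed.

Lemma cont_eps f x : continuous f x ->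
  forall eps, 0 < eps -> exists d, 0 < d /\ forall y, Rabs (y - x) < d -> Rabs (f y - f x) < eps.
Proof.
  intros Hc eps He.
  destruct (proj1 (filterlim_locally f (f x)) Hc (mkposreal eps He)) as [d Hd].
  exists d; split; [apply cond_pos|]. intros y Hy. apply (Hd y). exact Hy.
Qed.

Lemma deriv_cont (f : R -> R) (t l : R) : is_derive f t l -> continuous f t.
Proof. intro H. apply (ex_derive_continuous (K:=R_AbsRing) (V:=R_NormedModule)). exists l. exact H. Qed.

Lemma deriv_left f t l : is_derive f t l -> 0 < l ->
  exists d, 0 < d /\ forall s, t - d < s < t -> f s < f t.
Proof.
  intros H Hl. apply is_derive_Reals in H.
  destruct (H (l/2) ltac:(lra)) as [d Hd].
  exists d; split; [apply cond_pos|]. intros s Hs.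
  specialize (Hd (s - t) ltac:(lra)).
  replace (t + (s - t)) with s in Hd by ring.
  assert (Rabs (s - t) < d) by (rewrite Rabs_left; lra).
  specialize (Hd H0).
  apply Rabs_def2 in Hd. destruct Hd as [_ Hd].
  assert (Hq : 0 < (f s - f t) / (s - t)) by lra.
  assert (Hn : s - t < 0) by lra.
  destruct (Rle_or_lt (f t) (f s)) as [Hc|Hc]; [|lra].
  exfalso. assert (0 <= (f s - f t)) by lra.
  assert ((f s - f t) / (s - t) <= 0).
  { unfold Rdiv. apply Rmult_le_0_l; [lra|]. left. apply Rinv_lt_0_compat. lra. }
  lra.
Qed.

Lemma mvt_lb f g d s t : (forall u, 0 < u -> is_derive f u (g u)) -> 0 < s -> s <= t ->
  (forall u, s <= u <= t -> d <= g u) -> d * (t - s) <= f t - f s.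
Proof.
  intros Hd Hs Hst Hg.
  destruct (MVT_gen f s t g) as [c [Hc Heq]].
  - intros x Hx. apply Hd. rewrite Rmin_left in Hx by lra. lra.
  - intros x Hx. apply continuity_pt_filterlim. apply (deriv_cont f x (g x)). apply Hd.
    rewrite Rmin_left in Hx by lra. lra.
  - rewrite Rmin_left in Hc by lra. rewrite Rmax_right in Hc by lra.
    rewrite Heq. apply Rmult_le_compat_r; [lra|]. apply Hg. lra.
Qed.

Lemma primitive (h : R -> R) : (forall t, 0 < t -> continuous h t) ->
  exists H, forall t, 0 < t -> is_derive H t (h t).
Proof.
  intros Hc. exists (fun t => RInt h 1 t). intros t Ht.
  apply (is_derive_RInt h (fun t => RInt h 1 t) 1 t); [|apply Hc; exact Ht].
  exists (mkposreal (t/2) ltac:(lra)). intros b Hb. assert (Hb' : Rabs (b - t) < t/2) by exact Hb. clear Hb.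
  apply (RInt_correct (V:=R_CompleteNormedModule)). apply (ex_RInt_continuous (V:=R_CompleteNormedModule)). intros z Hz. apply Hc.
  apply Rabs_def2 in Hb'. destruct Hb' as [Hb1 Hb2]. assert (0 < Rmin 1 b) by (apply Rmin_pos; lra). lra.
Qed.

Lemma is_derive_eq (f : R -> R) (x l l' : R) : is_derive f x l -> l = l' -> is_derive f x l'.
Proof. intros H ->; exact H. Qed.

Lemma const_deriv0 (z : R -> R) : (forall t, 0 < t -> is_derive z t 0) ->
  forall s t, 0 < s -> 0 < t -> z s = z t.
Proof.
  intros Hz.
  assert (K : forall s t, 0 < s -> s <= t -> z s = z t).
  { intros s t Hs Hst.
    assert (A := mvt_lb z (fun _ => 0) 0 s t Hz Hs Hst (fun u _ => Rle_refl 0)).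
    assert (B := mvt_lb (fun u => - z u) (fun _ => 0) 0 s t).
    assert (B' : 0 * (t - s) <= - z t - - z s).
    { apply B; auto; [|intros; lra]. intros u Hu.
      apply is_derive_Reals. replace 0 with (- 0) by ring.
      apply (derivable_pt_lim_opp z u 0). apply is_derive_Reals. apply Hz; exact Hu. }
    lra. }
  intros s t Hs Ht. destruct (Rle_or_lt s t).
  - apply K; lra.
  - symmetry; apply K; lra.
Qed.

Lemma right_pos (f : R -> R) : 0 < f 0 -> filterlim f (at_right 0) (locally (f 0)) ->
  exists t1, 0 < t1 /\ 0 < f t1.
Proof.
  intros H0 Hl.
  destruct (proj1 (filterlim_locally f (f 0)) Hl (mkposreal (f 0) H0)) as [d Hd].
  exists (d/2). assert (0 < d) by apply cond_pos. split; [lra|].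
  assert (P := Hd (d/2)).
  assert (Q : ball 0 d (d/2)).
  { change (Rabs (d/2 - 0) < d). rewrite Rabs_right; lra. }
  specialize (P Q ltac:(lra)).
  assert (R1 : Rabs (f (d/2) - f 0) < f 0) by exact P.
  apply Rabs_def2 in R1. lra.
Qed.

Lemma pos_sol (f h : R -> R) : (forall t, 0 < t -> is_derive f t (f t * h t)) ->
  (forall t, 0 < t -> continuous h t) -> 0 < f 0 ->
  filterlim f (at_right 0) (locally (f 0)) -> forall t, 0 <= t -> 0 < f t.
Proof.
  intros Hd Hc H0 Hl.
  destruct (primitive h Hc) as [H HH].
  set (z := fun t => f t * exp (- H t)).
  assert (Hz : forall t, 0 < t -> is_derive z t 0).
  { intros t Ht. apply is_derive_Reals.
    assert (D1 := proj1 (is_derive_Reals _ _ _) (Hd t Ht)).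
    assert (D2 := proj1 (is_derive_Reals _ _ _) (HH t Ht)).
    assert (D3 : derivable_pt_lim (fun u => - H u) t (- h t)).
    { apply (derivable_pt_lim_opp H t (h t) D2). }
    assert (D4 : derivable_pt_lim (fun u => exp (- H u)) t (exp (- H t) * - h t)).
    { apply (derivable_pt_lim_comp (fun u => - H u) exp t (- h t) (exp (- H t)) D3).
      apply derivable_pt_lim_exp. }
    assert (D5 := derivable_pt_lim_mult f (fun u => exp (- H u)) t _ _ D1 D4).
    unfold z. replace 0 with (f t * h t * exp (- H t) + f t * (exp (- H t) * - h t)) by ring.
    exact D5. }
  destruct (right_pos f H0 Hl) as [t1 [Ht1 Hf1]].
  intros t Ht. destruct (Req_dec t 0) as [->|Hne]; [exact H0|].
  assert (E := const_deriv0 z Hz t1 t Ht1 ltac:(lra)).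
  unfold z in E.
  assert (P1 : 0 < f t1 * exp (- H t1)) by (apply Rmult_lt_0_compat; [exact Hf1| apply exp_pos]).
  rewrite E in P1.
  destruct (Rle_or_lt (f t) 0) as [Hn|Hp]; [|exact Hp].
  exfalso. assert (f t * exp (- H t) <= 0).
  { apply Rmult_le_0_r; [exact Hn| left; apply exp_pos]. }
  lra.
Qed.

Lemma deriv_opp (f g : R -> R) : (forall t, 0 < t -> is_derive f t (g t)) ->
  forall t, 0 < t -> is_derive (fun u => - f u) t (- g t).
Proof.
  intros Hd t Ht. apply is_derive_Reals. apply (derivable_pt_lim_opp f t (g t)).
  apply is_derive_Reals. apply Hd; exact Ht.
Qed.

Lemma lim_eps (f : R -> R) (L : R) : is_lim f p_infty L ->
  forall eps, 0 < eps -> exists M, forall t, M < t -> Rabs (f t - L) < eps.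
Proof.
  intros Hl eps He. apply is_lim_spec in Hl. exact (Hl (mkposreal eps He)).
Qed.

Lemma mono_lim (f : R -> R) T B : (forall s t, T <= s -> s <= t -> f s <= f t) ->
  (forall t, T <= t -> f t <= B) -> exists L : R, is_lim f p_infty L.
Proof.
  intros Hm Hb.
  set (E := fun v => exists t, T <= t /\ v = f t).
  destruct (completeness E) as [L [HL1 HL2]].
  - exists B. intros v [t [Ht ->]]. apply Hb; exact Ht.
  - exists (f T). exists T. split; [lra|reflexivity].
  - exists L. apply is_lim_spec. intros eps. simpl.
    destruct (Classical_Prop.classic (exists t, T <= t /\ L - eps < f t)) as [[t0 [Ht0 Hf0]]|Hn].
    + exists t0. intros x Hx.
      assert (f t0 <= f x) by (apply Hm; lra).
      assert (f x <= L) by (apply HL1; exists x; split; [lra|reflexivity]).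
      assert (0 < eps) by apply cond_pos.
      apply Rabs_def1; lra.
    + exfalso. assert (L <= L - eps).
      { apply HL2. intros v [t [Ht ->]].
        destruct (Rle_or_lt (f t) (L - eps)); [assumption|].
        exfalso; apply Hn; exists t; split; assumption. }
      assert (0 < eps) by apply cond_pos. lra.
Qed.

Lemma mono_lim_dec (f : R -> R) T B : (forall s t, T <= s -> s <= t -> f t <= f s) ->
  (forall t, T <= t -> B <= f t) -> exists L : R, is_lim f p_infty L.
Proof.
  intros Hm Hb.
  destruct (mono_lim (fun u => - f u) T (- B)) as [L HL].
  - intros s t Hs Hst. specialize (Hm s t Hs Hst). lra.
  - intros t Ht. specialize (Hb t Ht). lra.
  - exists (- L). apply is_lim_spec. intros eps.
    destruct (lim_eps _ _ HL eps (cond_pos eps)) as [M HM].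
    exists M. intros t Ht. specialize (HM t Ht).
    replace (f t - - L) with (- (- f t - L)) by ring. rewrite Rabs_Ropp. exact HM.
Qed.

Lemma lim_nonneg (f : R -> R) (L : R) : (forall t, 0 < t -> 0 < f t) ->
  is_lim f p_infty L -> 0 <= L.
Proof.
  intros Hp Hl. destruct (Rle_or_lt 0 L) as [H|H]; [exact H|].
  destruct (lim_eps f L Hl (- L / 2) ltac:(lra)) as [M HM].
  set (t := Rmax M 0 + 1).
  assert (M < t) by (unfold t; generalize (Rmax_l M 0); lra).
  assert (0 < t) by (unfold t; generalize (Rmax_r M 0); lra).
  specialize (HM t H0). specialize (Hp t H1). apply Rabs_def2 in HM. lra.
Qed.

Lemma growth (f h : R -> R) (L H : R) : (forall t, 0 < t -> 0 < f t) ->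
  (forall t, 0 < t -> is_derive f t (f t * h t)) ->
  is_lim f p_infty L -> is_lim h p_infty H -> H <= 0 /\ (0 < L -> H = 0).
Proof.
  intros Hp Hd Hf Hh.
  destruct (lim_eps f L Hf 1 ltac:(lra)) as [M1 HM1].
  assert (C1 : H <= 0).
  { destruct (Rle_or_lt H 0) as [HH|HH]; [exact HH|exfalso].
    destruct (lim_eps h H Hh (H/2) ltac:(lra)) as [M2 HM2].
    set (T := Rmax (Rmax M1 M2) 0 + 1).
    assert (T1 : M1 < T) by (unfold T; generalize (Rmax_l (Rmax M1 M2) 0) (Rmax_l M1 M2); lra).
    assert (T2 : M2 < T) by (unfold T; generalize (Rmax_l (Rmax M1 M2) 0) (Rmax_r M1 M2); lra).
    assert (T0 : 0 < T) by (unfold T; generalize (Rmax_r (Rmax M1 M2) 0); lra).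
    assert (Hhp : forall u, T <= u -> H/2 < h u).
    { intros u Hu. specialize (HM2 u ltac:(lra)). apply Rabs_def2 in HM2. lra. }
    assert (Hinc : forall t, T <= t -> f T <= f t).
    { intros t Ht. assert (A := mvt_lb f (fun u => f u * h u) 0 T t Hd T0 Ht).
      assert (0 * (t - T) <= f t - f T).
      { apply A. intros u Hu. assert (0 < f u) by (apply Hp; lra).
        assert (H/2 < h u) by (apply Hhp; lra). nra. }
      lra. }
    set (f0 := f T). assert (Hf0 : 0 < f0) by (apply Hp; exact T0).
    set (K := f0 * (H/2)). assert (HK : 0 < K) by (unfold K; nra).
    set (t := T + Rabs (L + 2 - f T) / K).
    assert (Ht : T <= t).
    { unfold t. assert (0 <= Rabs (L + 2 - f T) / K).
      { apply Rdiv_le_0_compat; [apply Rabs_pos|exact HK]. } lra. }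
    assert (A := mvt_lb f (fun u => f u * h u) K T t Hd T0 Ht).
    assert (B : K * (t - T) <= f t - f T).
    { apply A. intros u Hu. assert (f0 <= f u) by (apply Hinc; lra).
      assert (H/2 < h u) by (apply Hhp; lra). unfold K. nra. }
    assert (E : K * (t - T) = Rabs (L + 2 - f T)).
    { unfold t. field. lra. }
    assert (L + 2 - f T <= Rabs (L + 2 - f T)) by apply Rle_abs.
    specialize (HM1 t ltac:(lra)). apply Rabs_def2 in HM1. lra. }
  split; [exact C1|]. intros HL.
  destruct (Req_dec H 0) as [E|Hne]; [exact E|exfalso].
  assert (HH : H < 0) by lra.
  destruct (lim_eps h H Hh (- H/2) ltac:(lra)) as [M2 HM2].
  destruct (lim_eps f L Hf (L/2) ltac:(lra)) as [M3 HM3].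
  set (T := Rmax (Rmax M1 M2) (Rmax M3 0) + 1).
  assert (T1 : M1 < T) by (unfold T; generalize (Rmax_l (Rmax M1 M2) (Rmax M3 0)) (Rmax_l M1 M2); lra).
  assert (T2 : M2 < T) by (unfold T; generalize (Rmax_l (Rmax M1 M2) (Rmax M3 0)) (Rmax_r M1 M2); lra).
  assert (T3 : M3 < T) by (unfold T; generalize (Rmax_r (Rmax M1 M2) (Rmax M3 0)) (Rmax_l M3 0); lra).
  assert (T0 : 0 < T) by (unfold T; generalize (Rmax_r (Rmax M1 M2) (Rmax M3 0)) (Rmax_r M3 0); lra).
  set (K := - (L/2) * (H/2)). assert (HK : 0 < K) by (unfold K; nra).
  set (t := T + Rabs (f T - L + 2) / K).
  assert (Ht : T <= t).
  { unfold t. assert (0 <= Rabs (f T - L + 2) / K).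
    { apply Rdiv_le_0_compat; [apply Rabs_pos|exact HK]. } lra. }
  assert (A := mvt_lb (fun u => - f u) (fun u => - (f u * h u)) K T t (deriv_opp _ _ Hd) T0 Ht).
  assert (B : K * (t - T) <= - f t - - f T).
  { apply A. intros u Hu.
    specialize (HM2 u ltac:(lra)). specialize (HM3 u ltac:(lra)).
    apply Rabs_def2 in HM2. apply Rabs_def2 in HM3. unfold K. nra. }
  assert (E : K * (t - T) = Rabs (f T - L + 2)).
  { unfold t. field. lra. }
  assert (f T - L + 2 <= Rabs (f T - L + 2)) by apply Rle_abs.
  specialize (HM1 t ltac:(lra)). apply Rabs_def2 in HM1. lra.
Qed.

Lemma cont_abs (f : R -> R) t : continuous f t -> continuous (fun u => Rabs (f u)) t.
Proof.
  intro H. apply continuity_pt_filterlim. apply continuity_pt_filterlim in H.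
  apply (continuity_pt_comp f Rabs t H). apply Rcontinuity_abs.
Qed.

Lemma cont_add (f g : R -> R) t : continuous f t -> continuous g t -> continuous (fun u => f u + g u) t.
Proof.
  intros H1 H2. apply continuity_pt_filterlim. apply continuity_pt_filterlim in H1.
  apply continuity_pt_filterlim in H2. apply (continuity_pt_plus f g t H1 H2).
Qed.

Lemma cont_mul (f g : R -> R) t : continuous f t -> continuous g t -> continuous (fun u => f u * g u) t.
Proof.
  intros H1 H2. apply continuity_pt_filterlim. apply continuity_pt_filterlim in H1.
  apply continuity_pt_filterlim in H2. apply (continuity_pt_mult f g t H1 H2).
Qed.

Lemma cont_const (c : R) (t : R) : continuous (fun _ : R => c) t.
Proof. apply continuity_pt_filterlim. apply continuity_pt_const. intros a b; reflexivity. Qed.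

Lemma touch (g : R -> R) tau t0 d : t0 < tau -> is_derive g tau d -> 0 < d -> g tau = 0 ->
  (forall u, t0 <= u < tau -> 0 < g u) -> False.
Proof.
  intros Ht Hd Hp Hz Hpos.
  destruct (deriv_left g tau d Hd Hp) as [del [Hdel Hl]].
  set (s := Rmax t0 (tau - del/2)).
  assert (s1 : t0 <= s) by apply Rmax_l.
  assert (s2 : tau - del/2 <= s) by apply Rmax_r.
  assert (s3 : s < tau) by (unfold s; apply Rmax_lub_lt; lra).
  specialize (Hl s ltac:(lra)). specialize (Hpos s ltac:(lra)). lra.
Qed.

Lemma invariance (p r al be ga de : R -> R) t0 : 0 < t0 ->
  (forall t, 0 < t -> is_derive p t (al t * p t + be t * r t)) ->
  (forall t, 0 < t -> is_derive r t (ga t * p t + de t * r t)) ->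
  (forall t, 0 < t -> 0 <= be t) -> (forall t, 0 < t -> 0 <= ga t) ->
  (forall t, 0 < t -> continuous al t) -> (forall t, 0 < t -> continuous be t) ->
  (forall t, 0 < t -> continuous ga t) -> (forall t, 0 < t -> continuous de t) ->
  0 <= p t0 -> 0 <= r t0 -> forall t, t0 <= t -> 0 <= p t /\ 0 <= r t.
Proof.
  intros Ht0 Dp Dr Hbe Hga Cal Cbe Cga Cde P0 R0.
  set (lam := fun t => 1 + Rabs (al t) + Rabs (be t) + Rabs (ga t) + Rabs (de t)).
  assert (Clam : forall t, 0 < t -> continuous lam t).
  { intros t Ht. unfold lam.
    repeat apply cont_add; try apply cont_abs; auto. apply cont_const. }
  destruct (primitive lam Clam) as [G HG].
  set (E := fun t => exp (G t)).
  assert (HE : forall t, 0 < t -> 0 < E t) by (intros; apply exp_pos).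
  assert (DE : forall eps t, 0 < t -> derivable_pt_lim (fun u => eps * E u) t (eps * (lam t * E t))).
  { intros eps t Ht. apply (derivable_pt_lim_scal (fun u => E u) eps t).
    unfold E. replace (lam t * exp (G t)) with (exp (G t) * lam t) by ring.
    apply (derivable_pt_lim_comp G exp t (lam t) (exp (G t))).
    - apply is_derive_Reals. apply HG; exact Ht.
    - apply derivable_pt_lim_exp. }
  assert (Main : forall eps, 0 < eps -> forall t1, t0 <= t1 ->
            0 < p t1 + eps * E t1 /\ 0 < r t1 + eps * E t1).
  { intros eps Heps t1 Ht1.
    set (pe := fun u => p u + eps * E u).
    set (re := fun u => r u + eps * E u).
    assert (Dpe : forall t, 0 < t -> is_derive pe t (al t * p t + be t * r t + eps * (lam t * E t))).
    { intros t Ht. apply is_derive_Reals. apply (derivable_pt_lim_plus p (fun u => eps * E u)).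
      - apply is_derive_Reals; apply Dp; exact Ht.
      - apply DE; exact Ht. }
    assert (Dre : forall t, 0 < t -> is_derive re t (ga t * p t + de t * r t + eps * (lam t * E t))).
    { intros t Ht. apply is_derive_Reals. apply (derivable_pt_lim_plus r (fun u => eps * E u)).
      - apply is_derive_Reals; apply Dr; exact Ht.
      - apply DE; exact Ht. }
    assert (Cpe : forall t, 0 < t -> continuous pe t) by (intros t Ht; eapply deriv_cont; apply Dpe; exact Ht).
    assert (Cre : forall t, 0 < t -> continuous re t) by (intros t Ht; eapply deriv_cont; apply Dre; exact Ht).
    assert (Ipe : 0 < pe t0) by (unfold pe; generalize (HE t0 Ht0); nra).
    assert (Ire : 0 < re t0) by (unfold re; generalize (HE t0 Ht0); nra).
    set (S := fun s => t0 <= s <= t1 /\ forall u, t0 <= u <= s -> 0 < pe u /\ 0 < re u).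
    destruct (completeness S) as [tau [Hub Hlub]].
    { exists t1. intros s Hs. apply Hs. }
    { exists t0. split; [lra|]. intros u Hu. replace u with t0 by lra. auto. }
    assert (Htau0 : t0 <= tau) by (apply Hub; split; [lra|]; intros u Hu; replace u with t0 by lra; auto).
    assert (Htau1 : tau <= t1) by (apply Hlub; intros s Hs; apply Hs).
    assert (F1 : forall u, t0 <= u < tau -> 0 < pe u /\ 0 < re u).
    { intros u Hu.
      destruct (Classical_Prop.classic (exists s, S s /\ u <= s)) as [[s [Hs Hus]]|Hn].
      - apply Hs. lra.
      - exfalso. assert (tau <= u); [|lra].
        apply Hlub. intros s Hs. destruct (Rle_or_lt s u); [assumption|].
        exfalso; apply Hn; exists s; split; [assumption|lra]. }
    assert (Ttau : 0 < tau) by lra.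
    assert (F2 : forall g : R -> R, continuous g tau -> (forall u, t0 <= u < tau -> 0 < g u) -> 0 < g t0 -> 0 <= g tau).
    { intros g Cg Hg Hg0. destruct (Req_dec tau t0) as [->|Hne]; [lra|].
      destruct (Rle_or_lt 0 (g tau)) as [H|H]; [exact H|exfalso].
      destruct (cont_eps g tau Cg (- g tau) ltac:(lra)) as [d [Hd Hdd]].
      set (s := Rmax t0 (tau - d/2)).
      assert (s1 : t0 <= s) by apply Rmax_l.
      assert (s2 : tau - d/2 <= s) by apply Rmax_r.
      assert (s3 : s < tau) by (unfold s; apply Rmax_lub_lt; lra).
      specialize (Hdd s). assert (Rabs (s - tau) < d) by (rewrite Rabs_left; lra).
      specialize (Hdd H0). specialize (Hg s ltac:(lra)). apply Rabs_def2 in Hdd. lra. }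
    assert (Gp : 0 <= pe tau) by (apply F2; [apply Cpe; exact Ttau| intros u Hu; apply F1; exact Hu| exact Ipe]).
    assert (Gr : 0 <= re tau) by (apply F2; [apply Cre; exact Ttau| intros u Hu; apply F1; exact Hu| exact Ire]).
    assert (Hlam : forall t, 0 < t -> 0 < eps * E t) by (intros t Ht; generalize (HE t Ht); nra).
    destruct (Rle_lt_or_eq_dec 0 (pe tau) Gp) as [Pp|Pz].
    2:{ exfalso. assert (t0 < tau).
        { destruct (Req_dec tau t0) as [->|]; [lra|lra]. }
        apply (touch pe tau t0 (al tau * p tau + be tau * r tau + eps * (lam tau * E tau)) H (Dpe tau Ttau)).
        - assert (Ep : p tau = - (eps * E tau)) by (unfold pe in Pz; lra).
          assert (Er : r tau = re tau - eps * E tau) by (unfold re; ring).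
          rewrite Ep, Er. unfold lam.
          generalize (Hlam tau Ttau) (Hbe tau Ttau) (Rle_abs (al tau)) (Rle_abs (be tau))
            (Rabs_pos (ga tau)) (Rabs_pos (de tau)) (Rle_abs (- al tau)). rewrite Rabs_Ropp.
          intros. 
          replace (al tau * - (eps * E tau) + be tau * (re tau - eps * E tau) +
            eps * ((1 + Rabs (al tau) + Rabs (be tau) + Rabs (ga tau) + Rabs (de tau)) * E tau))
          with (be tau * re tau + (eps * E tau) * (1 + (Rabs (al tau) - al tau) + (Rabs (be tau) - be tau) + Rabs (ga tau) + Rabs (de tau))) by ring.
          assert (0 <= be tau * re tau) by nra.
          assert (0 < (eps * E tau) * (1 + (Rabs (al tau) - al tau) + (Rabs (be tau) - be tau) + Rabs (ga tau) + Rabs (de tau))).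
          { apply Rmult_lt_0_compat; lra. }
          lra.
        - lra.
        - intros u Hu; apply F1; exact Hu. }
    destruct (Rle_lt_or_eq_dec 0 (re tau) Gr) as [Rp|Rz].
    2:{ exfalso. assert (t0 < tau).
        { destruct (Req_dec tau t0) as [->|]; [lra|lra]. }
        apply (touch re tau t0 (ga tau * p tau + de tau * r tau + eps * (lam tau * E tau)) H (Dre tau Ttau)).
        - assert (Er : r tau = - (eps * E tau)) by (unfold re in Rz; lra).
          assert (Ep : p tau = pe tau - eps * E tau) by (unfold pe; ring).
          rewrite Ep, Er. unfold lam.
          generalize (Hlam tau Ttau) (Hga tau Ttau) (Rle_abs (ga tau)) (Rle_abs (de tau))
            (Rabs_pos (al tau)) (Rabs_pos (be tau)) (Rle_abs (- de tau)). rewrite Rabs_Ropp.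
          intros.
          replace (ga tau * (pe tau - eps * E tau) + de tau * - (eps * E tau) +
            eps * ((1 + Rabs (al tau) + Rabs (be tau) + Rabs (ga tau) + Rabs (de tau)) * E tau))
          with (ga tau * pe tau + (eps * E tau) * (1 + Rabs (al tau) + Rabs (be tau) + (Rabs (ga tau) - ga tau) + (Rabs (de tau) - de tau))) by ring.
          assert (0 <= ga tau * pe tau) by nra.
          assert (0 < (eps * E tau) * (1 + Rabs (al tau) + Rabs (be tau) + (Rabs (ga tau) - ga tau) + (Rabs (de tau) - de tau))).
          { apply Rmult_lt_0_compat; lra. }
          lra.
        - lra.
        - intros u Hu; apply F1; exact Hu. }
    destruct (Req_dec tau t1) as [<-|Hne].
    { split; assumption. }
    exfalso.
    destruct (cont_eps pe tau (Cpe tau Ttau) (pe tau) Pp) as [d1 [Hd1 Hdd1]].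
    destruct (cont_eps re tau (Cre tau Ttau) (re tau) Rp) as [d2 [Hd2 Hdd2]].
    set (s := Rmin t1 (tau + Rmin d1 d2 / 2)).
    assert (Hm1 : Rmin d1 d2 <= d1) by apply Rmin_l.
    assert (Hm2 : Rmin d1 d2 <= d2) by apply Rmin_r.
    assert (Hm0 : 0 < Rmin d1 d2) by (apply Rmin_pos; lra).
    assert (s1 : s <= t1) by apply Rmin_l.
    assert (s2 : s <= tau + Rmin d1 d2 / 2) by apply Rmin_r.
    assert (s3 : tau < s) by (unfold s; apply Rmin_glb_lt; lra).
    assert (S s).
    { split; [lra|]. intros u Hu. destruct (Rlt_or_le u tau) as [Hl|Hl].
      - apply F1; lra.
      - assert (Rabs (u - tau) < d1) by (rewrite Rabs_right; lra).
        assert (Rabs (u - tau) < d2) by (rewrite Rabs_right; lra).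
        specialize (Hdd1 u H). specialize (Hdd2 u H0).
        apply Rabs_def2 in Hdd1. apply Rabs_def2 in Hdd2. lra. }
    specialize (Hub s H). lra. }
  intros t Ht.
  assert (Et : 0 < E t) by (apply HE; lra).
  split.
  - destruct (Rle_or_lt 0 (p t)) as [H|H]; [exact H|exfalso].
    destruct (Main (- p t / (2 * E t)) ltac:(apply Rdiv_lt_0_compat; lra) t Ht) as [A _].
    assert (- p t / (2 * E t) * E t = - p t / 2) by (field; lra). lra.
  - destruct (Rle_or_lt 0 (r t)) as [H|H]; [exact H|exfalso].
    destruct (Main (- r t / (2 * E t)) ltac:(apply Rdiv_lt_0_compat; lra) t Ht) as [_ A].
    assert (- r t / (2 * E t) * E t = - r t / 2) by (field; lra). lra.
Qed.

Lemma no_zero_sign (p : R -> R) : (forall t, 0 < t -> continuous p t) ->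
  (forall t, 1 <= t -> p t <> 0) ->
  (forall t, 1 <= t -> 0 < p t) \/ (forall t, 1 <= t -> p t < 0).
Proof.
  intros Cp Hnz.
  assert (Cpt : forall a, 1 <= a -> continuity_pt p a) by (intros; apply continuity_pt_filterlim, Cp; lra).
  assert (Cpt' : forall a, 1 <= a -> continuity_pt (fun u => - p u) a).
  { intros a Ha. apply (continuity_pt_opp p a). apply Cpt; exact Ha. }
  destruct (Rlt_or_le 0 (p 1)) as [H1|H1].
  - left. intros t Ht. destruct (Rlt_or_le 0 (p t)) as [H|H]; [exact H|exfalso].
    assert (p t < 0) by (destruct H as [H'|H']; [exact H'| exfalso; apply (Hnz t Ht); exact H']).
    assert (Hlt : 1 < t) by (destruct Ht as [Ht|<-]; [exact Ht| lra]).
    destruct (Ranalysis5.IVT_interv (fun u => - p u) 1 t (fun a Ha => Cpt' a ltac:(lra)) Hlt ltac:(lra) ltac:(lra)) as [z [Hz Hpz]].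
    apply (Hnz z ltac:(lra)). lra.
  - right. intros t Ht.
    assert (H1' : p 1 < 0) by (destruct H1 as [H|H]; [exact H| exfalso; apply (Hnz 1 ltac:(lra)); exact H]).
    destruct (Rlt_or_le (p t) 0) as [H|H]; [exact H|exfalso].
    assert (0 < p t) by (destruct H as [H'|H']; [exact H'| exfalso; apply (Hnz t Ht); symmetry; exact H']).
    assert (Hlt : 1 < t) by (destruct Ht as [Ht|<-]; [exact Ht| lra]).
    destruct (Ranalysis5.IVT_interv p 1 t (fun a Ha => Cpt a ltac:(lra)) Hlt ltac:(lra) ltac:(lra)) as [z [Hz Hpz]].
    apply (Hnz z ltac:(lra)). exact Hpz.
Qed.

Lemma ev_sign (p r al be ga de : R -> R) :
  (forall t, 0 < t -> is_derive p t (al t * p t + be t * r t)) ->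
  (forall t, 0 < t -> is_derive r t (ga t * p t + de t * r t)) ->
  (forall t, 0 < t -> 0 <= be t) -> (forall t, 0 < t -> 0 <= ga t) ->
  (forall t, 0 < t -> continuous al t) -> (forall t, 0 < t -> continuous be t) ->
  (forall t, 0 < t -> continuous ga t) -> (forall t, 0 < t -> continuous de t) ->
  exists T, 0 < T /\
    ((forall t, T <= t -> 0 <= p t) \/ (forall t, T <= t -> p t <= 0)) /\
    ((forall t, T <= t -> 0 <= r t) \/ (forall t, T <= t -> r t <= 0)).
Proof.
  intros Dp Dr Hbe Hga Cal Cbe Cga Cde.
  destruct (Classical_Prop.classic (exists t0, 1 <= t0 /\ 0 <= p t0 /\ 0 <= r t0)) as [[t0 [H1 [H2 H3]]]|NA].
  { exists t0. assert (I := invariance p r al be ga de t0 ltac:(lra) Dp Dr Hbe Hga Cal Cbe Cga Cde H2 H3).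
    split; [lra|]. split; left; intros t Ht; apply (I t Ht). }
  destruct (Classical_Prop.classic (exists t0, 1 <= t0 /\ p t0 <= 0 /\ r t0 <= 0)) as [[t0 [H1 [H2 H3]]]|NB].
  { exists t0.
    assert (Dp' : forall t, 0 < t -> is_derive (fun u => - p u) t (al t * (- p t) + be t * (- r t))).
    { intros t Ht. apply is_derive_eq with (- (al t * p t + be t * r t)); [apply (deriv_opp p (fun u => al u * p u + be u * r u) Dp t Ht)| ring]. }
    assert (Dr' : forall t, 0 < t -> is_derive (fun u => - r u) t (ga t * (- p t) + de t * (- r t))).
    { intros t Ht. apply is_derive_eq with (- (ga t * p t + de t * r t)); [apply (deriv_opp r (fun u => ga u * p u + de u * r u) Dr t Ht)| ring]. }
    assert (I := invariance (fun u => - p u) (fun u => - r u) al be ga de t0 ltac:(lra) Dp' Dr' Hbe Hga Cal Cbe Cga Cde ltac:(lra) ltac:(lra)).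
    split; [lra|]. split; right; intros t Ht; generalize (I t Ht); lra. }
  assert (K : forall t, 1 <= t -> (0 < p t /\ r t < 0) \/ (p t < 0 /\ 0 < r t)).
  { intros t Ht. destruct (Rlt_or_le 0 (p t)); destruct (Rlt_or_le 0 (r t)).
    - exfalso; apply NA; exists t; repeat split; lra.
    - destruct (Req_dec (r t) 0).
      + exfalso; apply NA; exists t; repeat split; lra.
      + left; split; lra.
    - destruct (Req_dec (p t) 0).
      + exfalso; apply NA; exists t; repeat split; lra.
      + right; split; lra.
    - exfalso; apply NB; exists t; repeat split; lra. }
  assert (Cp : forall t, 0 < t -> continuous p t) by (intros t Ht; eapply deriv_cont; apply Dp; exact Ht).
  destruct (no_zero_sign p Cp) as [A|A].
  - intros t Ht Hz. destruct (K t Ht); lra.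
  - exists 1. split; [lra|]. split.
    + left; intros t Ht; generalize (A t Ht); lra.
    + right; intros t Ht; destruct (K t Ht); generalize (A t Ht); lra.
  - exists 1. split; [lra|]. split.
    + right; intros t Ht; generalize (A t Ht); lra.
    + left; intros t Ht; destruct (K t Ht); generalize (A t Ht); lra.
Qed.

Lemma cont_sub (f g : R -> R) t : continuous f t -> continuous g t -> continuous (fun u => f u - g u) t.
Proof.
  intros H1 H2. apply continuity_pt_filterlim. apply continuity_pt_filterlim in H1.
  apply continuity_pt_filterlim in H2. apply (continuity_pt_minus f g t H1 H2).
Qed.

Lemma cont_opp (f : R -> R) t : continuous f t -> continuous (fun u => - f u) t.
Proof.
  intros H1. apply continuity_pt_filterlim. apply continuity_pt_filterlim in H1.
  apply (continuity_pt_opp f t H1).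
Qed.

Lemma cont_inv (f : R -> R) t : continuous f t -> f t <> 0 -> continuous (fun u => / f u) t.
Proof.
  intros H1 H2. apply continuity_pt_filterlim. apply continuity_pt_filterlim in H1.
  apply (continuity_pt_inv f t H1 H2).
Qed.

Lemma deriv_opp1 (f : R -> R) (t l : R) : is_derive f t l -> is_derive (fun u => - f u) t (- l).
Proof.
  intro H. apply is_derive_Reals. apply (derivable_pt_lim_opp f t l). apply is_derive_Reals; exact H.
Qed.

Lemma deriv_q (x y : R -> R) (a k m t dx dy : R) : is_derive x t dx -> is_derive y t dy -> 1 + k * x t <> 0 ->
 is_derive (fun u => / (1 + k * x u) - y u - a * x u - m * x u * y u) t (dx * (- k / (1+k * x t)^2 - a - m * y t) + dy * (-1 - m * x t)).
Proof.
intros Hx Hy Hk.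
auto_derive.
- repeat split; auto; eexists; eauto.
- replace (Derive (fun x0 => x x0) t) with dx by (symmetry; apply is_derive_unique; exact Hx).
  replace (Derive (fun x0 => y x0) t) with dy by (symmetry; apply is_derive_unique; exact Hy).
  field. exact Hk.
Qed.

Lemma deriv_p (x y : R -> R) (c t dx dy : R) : is_derive x t dx -> is_derive y t dy ->
 is_derive (fun u => 1 - x u - c * y u) t (- dx - c * dy).
Proof.
intros Hx Hy.
auto_derive.
- repeat split; auto; eexists; eauto.
- replace (Derive (fun x0 => x x0) t) with dx by (symmetry; apply is_derive_unique; exact Hx).
  replace (Derive (fun x0 => y x0) t) with dy by (symmetry; apply is_derive_unique; exact Hy).
  ring.
Qed.

Lemma lim_eq (f : R -> R) (l l' : R) : is_lim f p_infty l -> l = l' -> is_lim f p_infty l'.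
Proof. intros H ->; exact H. Qed.
Lemma lim_mul (f g : R -> R) (l1 l2 : R) : is_lim f p_infty l1 -> is_lim g p_infty l2 ->
  is_lim (fun t => f t * g t) p_infty (l1 * l2).
Proof. intros H1 H2. apply (is_lim_mult f g p_infty l1 l2 H1 H2). exact I. Qed.
Lemma lim_inv (f : R -> R) (l : R) : is_lim f p_infty l -> l <> 0 ->
  is_lim (fun t => / f t) p_infty (/ l).
Proof. intros H1 H2. apply (is_lim_inv f p_infty l H1). intro E. apply H2. injection E. auto. Qed.
Lemma lim_c (c : R) : is_lim (fun _ => c) p_infty c.
Proof. apply is_lim_const. Qed.

Lemma inv_le1 (z : R) : 0 <= z -> / (1 + z) <= 1.
Proof.
  intro H. assert (A : / (1 + z) * (1 + z) = 1) by (field; lra).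
  assert (0 < / (1 + z)) by (apply Rinv_0_lt_compat; lra). nra.
Qed.
Lemma no_two (a c k m y1 y2 : R) : 0 < a -> 0 < c -> c < 1 -> 0 < k -> 0 < m ->
  0 < y1 -> y1 < y2 -> 0 < 1 - c * y1 -> 0 < 1 - c * y2 ->
  / (1 + k * (1 - c * y1)) - y1 - a * (1 - c * y1) - m * (1 - c * y1) * y1 = 0 ->
  / (1 + k * (1 - c * y2)) - y2 - a * (1 - c * y2) - m * (1 - c * y2) * y2 = 0 -> False.
Proof.
  intros ha hc hc1 hk hm h1 h12 hx1 hx2 e1 e2.
  set (x1 := 1 - c * y1) in *. set (x2 := 1 - c * y2) in *.
  set (u1 := / (1 + k * x1)) in *. set (u2 := / (1 + k * x2)) in *.
  assert (U1 : u1 * (1 + k * x1) = 1) by (unfold u1; field; nra).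
  assert (U2 : u2 * (1 + k * x2) = 1) by (unfold u2; field; nra).
  assert (P1 : 0 < u1) by (unfold u1; apply Rinv_0_lt_compat; nra).
  assert (P2 : 0 < u2) by (unfold u2; apply Rinv_0_lt_compat; nra).
  assert (L0 : 0 < u1 * (k * x1)) by (apply Rmult_lt_0_compat; [lra| apply Rmult_lt_0_compat; lra]).
  assert (L1 : u1 < 1) by nra.
  assert (D : u2 - u1 = u1 * u2 * k * c * (y2 - y1)).
  { assert (u2 - u1 = u1 * u2 * ((1 + k * x1) - (1 + k * x2))).
    { transitivity (u2 * (u1 * (1 + k * x1)) - u1 * (u2 * (1 + k * x2))).
      - rewrite U1, U2; ring.
      - ring. }
    rewrite H. unfold x1, x2. ring. }
  assert (D2 : u2 - u1 = (y2 - y1) * (1 - a * c + m - m * c * (y1 + y2))).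
  { assert (u1 = y1 + a * x1 + m * x1 * y1) by lra.
    assert (u2 = y2 + a * x2 + m * x2 * y2) by lra.
    rewrite H, H0. unfold x1, x2. ring. }
  assert (E1 : k * c * u1 * u2 = 1 - a * c + m - m * c * (y1 + y2)).
  { apply Rmult_eq_reg_l with (y2 - y1); [|lra]. rewrite <- D2, D. ring. }
  assert (y1c : 0 < m * (1 - c * y1)) by (unfold x1 in hx1; apply Rmult_lt_0_compat; lra).
  assert (I1 : k * c * u2 > 1 - a * c - m * c * y2).
  { assert (k * c * u2 > k * c * u1 * u2).
    { assert (0 < k * c * u2) by (apply Rmult_lt_0_compat; [nra|lra]). nra. }
    nra. }
  assert (I2 : k * u2 * x2 * c > (1 - a * c - m * c * y2) * x2).
  { assert (0 < x2) by exact hx2. nra. }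
  assert (K : k * u2 * x2 = 1 - u2) by nra.
  assert (u2 = y2 + a * x2 + m * x2 * y2) by lra.
  assert ((1 - y2 - a * x2 - m * x2 * y2) * c > x2 - a * c * x2 - m * c * y2 * x2) by nra.
  unfold x2 in H0. nra.
Qed.

Theorem theorem7 (a b c k m : R)
  (ha : 0 < a) (hb : 0 < b) (hc : 0 < c) (hk : 0 < k) (hm : 0 < m)
  (hc1 : c < 1) (hk1 : k < / a - 1)
  (xs ys : R) (heq : pos_equilibrium a b c k m xs ys)
  (hnode : stable_node a b c k m xs ys) :
  forall x y : R -> R, is_solution a b c k m x y ->
    0 < x 0 -> 0 < y 0 ->
    is_lim x p_infty xs /\ is_lim y p_infty ys.
Proof.
  intros x y [Dx [Dy [Rx Ry]]] Hx0 Hy0.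
  destruct heq as [Hxs [Hys [Efx Efy]]]. unfold fx, fy in Efx, Efy. clear hnode.
  assert (Cx : forall t, 0 < t -> continuous x t) by (intros t Ht; eapply deriv_cont; apply Dx; exact Ht).
  assert (Cy : forall t, 0 < t -> continuous y t) by (intros t Ht; eapply deriv_cont; apply Dy; exact Ht).
  set (hx := fun t => b * (1 - x t - c * y t)).
  assert (Dx' : forall t, 0 < t -> is_derive x t (x t * hx t)).
  { intros t Ht. apply is_derive_eq with (fx a b c k m (x t) (y t)); [apply Dx; exact Ht|].
    unfold fx, hx; ring. }
  assert (Chx : forall t, 0 < t -> continuous hx t).
  { intros t Ht. unfold hx. apply cont_mul; [apply cont_const|].
    apply cont_sub; [apply cont_sub; [apply cont_const| apply Cx; exact Ht]|].
    apply cont_mul; [apply cont_const| apply Cy; exact Ht]. }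
  assert (xpos : forall t, 0 <= t -> 0 < x t) by exact (pos_sol x hx Dx' Chx Hx0 Rx).
  assert (Nk : forall t, 0 < t -> 1 + k * x t <> 0).
  { intros t Ht. generalize (xpos t ltac:(lra)). intro. nra. }
  set (hy := fun t => / (1 + k * x t) - y t - a * x t - m * x t * y t).
  assert (Dy' : forall t, 0 < t -> is_derive y t (y t * hy t)).
  { intros t Ht. apply is_derive_eq with (fy a b c k m (x t) (y t)); [apply Dy; exact Ht|].
    unfold fy, hy; ring. }
  assert (Chy : forall t, 0 < t -> continuous hy t).
  { intros t Ht. unfold hy.
    apply cont_sub; [apply cont_sub; [apply cont_sub|]|].
    - apply cont_inv; [|apply Nk; exact Ht].
      apply cont_add; [apply cont_const| apply cont_mul; [apply cont_const| apply Cx; exact Ht]].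
    - apply Cy; exact Ht.
    - apply cont_mul; [apply cont_const| apply Cx; exact Ht].
    - apply cont_mul; [apply cont_mul; [apply cont_const| apply Cx; exact Ht]| apply Cy; exact Ht]. }
  assert (ypos : forall t, 0 <= t -> 0 < y t) by exact (pos_sol y hy Dy' Chy Hy0 Ry).
  set (p := fun t => 1 - x t - c * y t).
  set (r := fun t => - hy t).
  set (al := fun t => (- b) * x t).
  set (be := fun t => c * y t).
  set (ga := fun t => (b * x t) * (k * / ((1 + k * x t) * (1 + k * x t)) + a + m * y t)).
  set (de := fun t => - (y t * (1 + m * x t))).
  assert (Dp : forall t, 0 < t -> is_derive p t (al t * p t + be t * r t)).
  { intros t Ht. apply is_derive_eq with (- (x t * hx t) - c * (y t * hy t)).
    - apply deriv_p; [apply Dx'|apply Dy']; exact Ht.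
    - unfold al, be, p, r, hx; ring. }
  assert (Dr : forall t, 0 < t -> is_derive r t (ga t * p t + de t * r t)).
  { intros t Ht. unfold r.
    apply is_derive_eq with (- ((x t * hx t) * (- k / (1+k * x t)^2 - a - m * y t) + (y t * hy t) * (-1 - m * x t))).
    - apply deriv_opp1. unfold hy at 1. apply deriv_q; [apply Dx'|apply Dy'|apply Nk]; exact Ht.
    - unfold ga, de, p, hx. generalize (Nk t Ht). intro. field. exact H. }
  assert (Hbe : forall t, 0 < t -> 0 <= be t).
  { intros t Ht. unfold be. generalize (ypos t ltac:(lra)). intro. nra. }
  assert (Hga : forall t, 0 < t -> 0 <= ga t).
  { intros t Ht. unfold ga. generalize (xpos t ltac:(lra)) (ypos t ltac:(lra)). intros X Y.
    assert (0 < (1 + k * x t) * (1 + k * x t)) by nra.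
    assert (0 < / ((1 + k * x t) * (1 + k * x t))) by (apply Rinv_0_lt_compat; exact H).
    assert (0 < k * / ((1 + k * x t) * (1 + k * x t))) by nra.
    assert (0 < m * y t) by nra.
    apply Rmult_le_pos; nra. }
  assert (Cal : forall t, 0 < t -> continuous al t).
  { intros t Ht. unfold al. apply cont_mul; [apply cont_const| apply Cx; exact Ht]. }
  assert (Cbe : forall t, 0 < t -> continuous be t).
  { intros t Ht. unfold be. apply cont_mul; [apply cont_const| apply Cy; exact Ht]. }
  assert (Cga : forall t, 0 < t -> continuous ga t).
  { intros t Ht. unfold ga. apply cont_mul; [apply cont_mul; [apply cont_const| apply Cx; exact Ht]|].
    apply cont_add; [apply cont_add|].
    - apply cont_mul; [apply cont_const|]. apply cont_inv.
      + apply cont_mul; apply cont_add; try apply cont_const; apply cont_mul; try apply cont_const; apply Cx; exact Ht.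
      + generalize (Nk t Ht). intro. apply Rmult_integral_contrapositive; split; exact H.
    - apply cont_const.
    - apply cont_mul; [apply cont_const| apply Cy; exact Ht]. }
  assert (Cde : forall t, 0 < t -> continuous de t).
  { intros t Ht. unfold de. apply cont_opp. apply cont_mul; [apply Cy; exact Ht|].
    apply cont_add; [apply cont_const| apply cont_mul; [apply cont_const| apply Cx; exact Ht]]. }
  destruct (ev_sign p r al be ga de Dp Dr Hbe Hga Cal Cbe Cga Cde) as [T [HT [Sp Sr]]].
  assert (LX : exists L1 : R, is_lim x p_infty L1).
  { destruct Sp as [Sp|Sp].
    - apply (mono_lim x T 1).
      + intros s t Hs Hst. assert (A := mvt_lb x (fun u => x u * hx u) 0 s t Dx' ltac:(lra) Hst).
        assert (0 * (t - s) <= x t - x s); [|lra]. apply A. intros u Hu.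
        generalize (xpos u ltac:(lra)) (Sp u ltac:(lra)). intros H1 H2; unfold hx, p in *; cbv beta in *. apply Rmult_le_pos; [lra| apply Rmult_le_pos; lra].
      + intros t Ht. generalize (ypos t ltac:(lra)) (Sp t Ht). intros H1 H2; unfold p in *; cbv beta in *. assert (0 < c * y t) by (apply Rmult_lt_0_compat; lra). lra.
    - apply (mono_lim_dec x T 0).
      + intros s t Hs Hst.
        assert (A := mvt_lb (fun u => - x u) (fun u => - (x u * hx u)) 0 s t (deriv_opp _ _ Dx') ltac:(lra) Hst).
        assert (0 * (t - s) <= - x t - - x s); [|lra]. apply A. intros u Hu.
        generalize (xpos u ltac:(lra)) (Sp u ltac:(lra)). intros H1 H2; unfold hx, p in *; cbv beta in *. assert (0 <= x u * (b * - (1 - x u - c * y u))) by (apply Rmult_le_pos; [lra| apply Rmult_le_pos; lra]). lra.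
      + intros t Ht. generalize (xpos t ltac:(lra)). lra. }
  assert (LY : exists L2 : R, is_lim y p_infty L2).
  { destruct Sr as [Sr|Sr].
    - apply (mono_lim_dec y T 0).
      + intros s t Hs Hst.
        assert (A := mvt_lb (fun u => - y u) (fun u => - (y u * hy u)) 0 s t (deriv_opp _ _ Dy') ltac:(lra) Hst).
        assert (0 * (t - s) <= - y t - - y s); [|lra]. apply A. intros u Hu.
        generalize (ypos u ltac:(lra)) (Sr u ltac:(lra)). intros H1 H2; unfold r, hy in *; cbv beta in *. assert (0 <= y u * - (/ (1 + k * x u) - y u - a * x u - m * x u * y u)) by (apply Rmult_le_pos; lra). lra.
      + intros t Ht. generalize (ypos t ltac:(lra)). lra.
    - apply (mono_lim y T 1).
      + intros s t Hs Hst. assert (A := mvt_lb y (fun u => y u * hy u) 0 s t Dy' ltac:(lra) Hst).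
        assert (0 * (t - s) <= y t - y s); [|lra]. apply A. intros u Hu.
        generalize (ypos u ltac:(lra)) (Sr u ltac:(lra)). intros H1 H2; unfold r, hy in *; cbv beta in *. assert (0 <= y u * (/ (1 + k * x u) - y u - a * x u - m * x u * y u)) by (apply Rmult_le_pos; lra). lra.
      + intros t Ht. generalize (ypos t ltac:(lra)) (xpos t ltac:(lra)) (Sr t Ht). intros; unfold r, hy in *; cbv beta in *.
        assert (/ (1 + k * x t) <= 1) by (apply inv_le1; nra).
        assert (0 <= m * x t * y t) by (apply Rmult_le_pos; [nra|lra]). nra. }
  destruct LX as [L1 HL1]. destruct LY as [L2 HL2].
  assert (xpos' : forall t, 0 < t -> 0 < x t) by (intros; apply xpos; lra).
  assert (ypos' : forall t, 0 < t -> 0 < y t) by (intros; apply ypos; lra).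
  assert (N1 := lim_nonneg x L1 xpos' HL1).
  assert (N2 := lim_nonneg y L2 ypos' HL2).
  assert (Lhx : is_lim hx p_infty (b * (1 - L1 - c * L2))).
  { unfold hx. apply lim_mul; [apply lim_c|].
    apply is_lim_minus'; [apply is_lim_minus'; [apply lim_c| exact HL1]|].
    apply lim_mul; [apply lim_c| exact HL2]. }
  assert (Lhy : is_lim hy p_infty (/ (1 + k * L1) - L2 - a * L1 - m * L1 * L2)).
  { unfold hy. apply is_lim_minus'; [apply is_lim_minus'; [apply is_lim_minus'|]|].
    - apply lim_inv; [|nra]. apply (is_lim_plus' (fun _ => 1) (fun t => k * x t)); [apply lim_c|].
      apply lim_mul; [apply lim_c| exact HL1].
    - exact HL2.
    - apply lim_mul; [apply lim_c| exact HL1].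
    - apply lim_mul; [apply lim_mul; [apply lim_c| exact HL1]| exact HL2]. }
  destruct (growth x hx L1 _ xpos' Dx' HL1 Lhx) as [Gx1 Gx2].
  destruct (growth y hy L2 _ ypos' Dy' HL2 Lhy) as [Gy1 Gy2].
  assert (Exs : 1 - xs - c * ys = 0).
  { assert (b * xs <> 0) by nra.
    apply (Rmult_eq_reg_l (b * xs)); [rewrite Rmult_0_r; exact Efx| exact H]. }
  assert (Eys : / (1 + k * xs) - ys - a * xs - m * xs * ys = 0).
  { apply (Rmult_eq_reg_l ys); [rewrite Rmult_0_r; exact Efy| lra]. }
  assert (ak : a * (1 + k) < 1).
  { assert (1 + k < / a) by lra. 
    assert (a * (1 + k) < a * / a) by (apply Rmult_lt_compat_l; lra).
    rewrite Rinv_r in H0; lra. }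
  destruct (Rle_lt_or_eq_dec 0 L1 N1) as [P1|Z1].
  2:{ exfalso. subst L1. 
      assert (cL : 1 <= c * L2) by nra.
      assert (P2 : 0 < L2) by nra.
      specialize (Gy2 P2). rewrite Rmult_0_r, Rplus_0_r, Rinv_1 in Gy2. nra. }
  specialize (Gx2 P1).
  assert (EL1 : 1 - L1 - c * L2 = 0) by (apply (Rmult_eq_reg_l b); [rewrite Gx2; ring| lra]).
  destruct (Rle_lt_or_eq_dec 0 L2 N2) as [P2|Z2].
  2:{ exfalso. subst L2.
      assert (L1 = 1) by lra. subst L1.
      rewrite Rmult_1_r, Rmult_0_r in Gy1.
      assert (Ai : a < / (1 + k)).
      { apply (Rmult_lt_reg_r (1 + k)); [lra|]. rewrite Rinv_l by lra. lra. }
      lra. }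
  specialize (Gy2 P2).
  assert (X1 : L1 = 1 - c * L2) by lra.
  assert (X2 : xs = 1 - c * ys) by lra.
  rewrite X1 in Gy2. rewrite X2 in Eys.
  assert (EY : L2 = ys).
  { destruct (Rtotal_order L2 ys) as [H|[H|H]]; [exfalso| exact H| exfalso].
    - apply (no_two a c k m L2 ys ha hc hc1 hk hm P2 H ltac:(lra) ltac:(lra) Gy2 Eys).
    - apply (no_two a c k m ys L2 ha hc hc1 hk hm Hys H ltac:(lra) ltac:(lra) Eys Gy2). }
  assert (EX : L1 = xs) by (rewrite X1, X2, EY; reflexivity).
  rewrite <- EX, <- EY. split; assumption.
Qed.
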